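(* Suppose $X$ has well-defined scattered $\Pi_1$-products. If $A$ is a homotopy cut-set for paths $\alpha,\beta:[0,1]\to X$, then there is a homotopy cut-set $B\subseteq A$ for $\alpha$ and $\beta$ such that $\alpha(B\cap(0,1))=\beta(B\cap(0,1))\subseteq\mathbf{aw}(X)$.
   Context: $\simeq$ is path-homotopy. A loop is trivial if path-homotopic to a constant loop. A sequence of loops $\alpha_n$ based at $x$ is a null-sequence if every neighborhood of $x$ contains $\alpha_n([0,1])$ for all but finitely many $n$. $\mathbf{aw}(X)=\{x\in X\mid \text{there is a null-sequence of non-trivial loops based at }x\}$. For paths $\alpha,\beta:[s,t]\to X$, a set $A\subseteq[s,t]$ is a homotopy cut-set for $\alpha,\beta$ if $A$ is closed, nowhere dense, contains $\{s,t\}$, $\alpha|_A=\beta|_A$, and $\alpha|_{[a,b]}\simeq\beta|_{[a,b]}$ for every component $(a,b)$ of $[s,t]\setminus A$. $X$ has well-defined scattered $\Pi_1$-products if any two paths $[0,1]\to X$ that admit a scattered homotopy cut-set are path-homotopic. *)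

(* Defs.v *)
From Stdlib Require Import Reals.
Open Scope R_scope.

Record TopSpace := {
  pt :> Type;
  is_open : (pt -> Prop) -> Prop;
  open_full : is_open (fun _ => True);
  open_inter : forall U V, is_open U -> is_open V -> is_open (fun x => U x /\ V x);
  open_union : forall (F : (pt -> Prop) -> Prop),
      (forall U, F U -> is_open U) -> is_open (fun x => exists U, F U /\ U x)
}.

Definition cont_on {X : TopSpace} (f : R -> X) (D : R -> Prop) : Prop :=
  forall U, is_open X U -> forall x, D x -> U (f x) ->
    exists d, 0 < d /\ forall y, D y -> Rabs (y - x) < d -> U (f y).

Definition cont_on2 {X : TopSpace} (H : R -> R -> X) (D : R -> R -> Prop) : Prop :=
  forall U, is_open X U -> forall x u, D x u -> U (H x u) ->
    exists d, 0 < d /\ forall y v, D y v -> Rabs (y - x) < d -> Rabs (v - u) < d ->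
      U (H y v).

Definition interval (s t : R) : R -> Prop := fun x => s <= x <= t.

(** A path [s,t] -> X, represented by a function R -> X (only values on [s,t] matter). *)
Definition is_path {X : TopSpace} (a : R -> X) (s t : R) : Prop :=
  s <= t /\ cont_on a (interval s t).

Definition path_homotopic {X : TopSpace} (a b : R -> X) (s t : R) : Prop :=
  exists H : R -> R -> X,
    cont_on2 H (fun x u => s <= x <= t /\ 0 <= u <= 1) /\
    (forall x, s <= x <= t -> H x 0 = a x /\ H x 1 = b x) /\
    (forall u, 0 <= u <= 1 -> H s u = a s /\ H t u = a t).

Definition is_loop {X : TopSpace} (a : R -> X) (x : X) : Prop :=
  is_path a 0 1 /\ a 0 = x /\ a 1 = x.

Definition trivial_loop {X : TopSpace} (a : R -> X) : Prop :=
  path_homotopic a (fun _ => a 0) 0 1.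

Definition null_sequence {X : TopSpace} (al : nat -> R -> X) (x : X) : Prop :=
  (forall n, is_loop (al n) x) /\
  forall U, is_open X U -> U x ->
    exists N, forall n, (N <= n)%nat -> forall r, 0 <= r <= 1 -> U (al n r).

Definition aw (X : TopSpace) : X -> Prop :=
  fun x => exists al : nat -> R -> X,
    null_sequence al x /\ forall n, ~ trivial_loop (al n).

Definition closure_R (A : R -> Prop) : R -> Prop :=
  fun x => forall e, 0 < e -> exists y, A y /\ Rabs (y - x) < e.

Definition closed_R (A : R -> Prop) : Prop := forall x, closure_R A x -> A x.

Definition nowhere_dense (A : R -> Prop) : Prop :=
  ~ (exists x e, 0 < e /\ forall y, Rabs (y - x) < e -> closure_R A y).

Definition scattered (A : R -> Prop) : Prop :=
  forall Y : R -> Prop, (forall y, Y y -> A y) -> (exists y, Y y) ->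
    exists y, Y y /\ exists e, 0 < e /\ forall z, Y z -> Rabs (z - y) < e -> z = y.

(** C is a connected component of S (subsets of R; connected = interval). *)
Definition is_component (S C : R -> Prop) : Prop :=
  (exists x, C x) /\ (forall x, C x -> S x) /\
  (forall x y z, C x -> C z -> x <= y <= z -> C y) /\
  (forall C' : R -> Prop,
     (forall x, C x -> C' x) -> (forall x, C' x -> S x) ->
     (forall x y z, C' x -> C' z -> x <= y <= z -> C' y) ->
     forall x, C' x -> C x).

Definition htpy_cut_set {X : TopSpace} (a b : R -> X) (s t : R) (A : R -> Prop) : Prop :=
  (forall x, A x -> s <= x <= t) /\
  closed_R A /\ nowhere_dense A /\ A s /\ A t /\
  (forall x, A x -> a x = b x) /\
  (forall c d, c < d ->
     is_component (fun x => s <= x <= t /\ ~ A x) (fun x => c < x < d) ->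
     path_homotopic a b c d).

Definition well_defined_scattered_products (X : TopSpace) : Prop :=
  forall a b : R -> X, is_path a 0 1 -> is_path b 0 1 ->
    (exists A, scattered A /\ htpy_cut_set a b 0 1 A) ->
    path_homotopic a b 0 1.

Definition image {X : TopSpace} (f : R -> X) (D : R -> Prop) : X -> Prop :=
  fun y => exists x, D x /\ f x = y.

(* Main.v *)
Require Import Defs.
From Stdlib Require Import Reals.
From Stdlib Require Import Lra Lia Classical ClassicalEpsilon.
Open Scope R_scope.


Ltac rabs := unfold Rabs in *; repeat match goal with |- context [Rcase_abs ?x] => destruct (Rcase_abs x) | H: context [Rcase_abs ?x] |- _ => destruct (Rcase_abs x) end; lra.

Definition rc2 (f : R -> R -> R) : Prop :=
  forall x u e, 0 < e -> exists d, 0 < d /\ forall y v, Rabs (y - x) < d -> Rabs (v - u) < d -> Rabs (f y v - f x u) < e.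

Lemma rc2_const c : rc2 (fun _ _ => c).
Proof. intros x u e He; exists 1; split; [lra|]; intros; rabs. Qed.
Lemma rc2_fst : rc2 (fun x _ => x).
Proof. intros x u e He; exists e; split; [lra|]; intros; rabs. Qed.
Lemma rc2_snd : rc2 (fun _ u => u).
Proof. intros x u e He; exists e; split; [lra|]; intros; rabs. Qed.
Lemma rc2_plus f g : rc2 f -> rc2 g -> rc2 (fun x u => f x u + g x u).
Proof. intros Hf Hg x u e He.
  destruct (Hf x u (e/2)) as [d1 [Hd1 H1]]; [lra|].
  destruct (Hg x u (e/2)) as [d2 [Hd2 H2]]; [lra|].
  exists (Rmin d1 d2); split; [apply Rmin_glb_lt; lra|]; intros y v Hy Hv.
  assert (A1 := Rmin_l d1 d2); assert (A2 := Rmin_r d1 d2).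
  specialize (H1 y v ltac:(lra) ltac:(lra)); specialize (H2 y v ltac:(lra) ltac:(lra)). rabs. Qed.
Lemma rc2_opp f : rc2 f -> rc2 (fun x u => - f x u).
Proof. intros Hf x u e He. destruct (Hf x u e He) as [d [Hd H]]. exists d; split; auto; intros y v Hy Hv. specialize (H y v Hy Hv); rabs. Qed.
Lemma rc2_minus f g : rc2 f -> rc2 g -> rc2 (fun x u => f x u - g x u).
Proof. intros; unfold Rminus; apply rc2_plus; auto; apply rc2_opp; auto. Qed.
Lemma rc2_min f g : rc2 f -> rc2 g -> rc2 (fun x u => Rmin (f x u) (g x u)).
Proof. intros Hf Hg x u e He.
  destruct (Hf x u e) as [d1 [Hd1 H1]]; [lra|].
  destruct (Hg x u e) as [d2 [Hd2 H2]]; [lra|].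
  exists (Rmin d1 d2); split; [apply Rmin_glb_lt; lra|]; intros y v Hy Hv.
  assert (A1 := Rmin_l d1 d2); assert (A2 := Rmin_r d1 d2).
  specialize (H1 y v ltac:(lra) ltac:(lra)); specialize (H2 y v ltac:(lra) ltac:(lra)).
  unfold Rmin; repeat destruct Rle_dec; rabs. Qed.
Lemma rc2_max f g : rc2 f -> rc2 g -> rc2 (fun x u => Rmax (f x u) (g x u)).
Proof. intros Hf Hg x u e He.
  destruct (Hf x u e) as [d1 [Hd1 H1]]; [lra|].
  destruct (Hg x u e) as [d2 [Hd2 H2]]; [lra|].
  exists (Rmin d1 d2); split; [apply Rmin_glb_lt; lra|]; intros y v Hy Hv.
  assert (A1 := Rmin_l d1 d2); assert (A2 := Rmin_r d1 d2).
  specialize (H1 y v ltac:(lra) ltac:(lra)); specialize (H2 y v ltac:(lra) ltac:(lra)).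
  unfold Rmax; repeat destruct Rle_dec; rabs. Qed.
Lemma rc2_mult f g : rc2 f -> rc2 g -> rc2 (fun x u => f x u * g x u).
Proof. intros Hf Hg x u e He.
  set (F := f x u); set (G := g x u).
  assert (HF : 0 <= Rabs F) by apply Rabs_pos. assert (HG : 0 <= Rabs G) by apply Rabs_pos.
  destruct (Hf x u (Rmin 1 (e / (2 * (Rabs G + 1))))) as [d1 [Hd1 H1]].
  { apply Rmin_glb_lt; [lra|]. apply Rdiv_lt_0_compat; lra. }
  destruct (Hg x u (e / (2 * (Rabs F + 2)))) as [d2 [Hd2 H2]].
  { apply Rdiv_lt_0_compat; lra. }
  exists (Rmin d1 d2); split; [apply Rmin_glb_lt; lra|]; intros y v Hy Hv.
  assert (A1 := Rmin_l d1 d2); assert (A2 := Rmin_r d1 d2).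
  specialize (H1 y v ltac:(lra) ltac:(lra)); specialize (H2 y v ltac:(lra) ltac:(lra)).
  fold F in H1; fold G in H2.
  set (fy := f y v) in *; set (gy := g y v) in *.
  assert (E : fy * gy - F * G = fy * (gy - G) + G * (fy - F)) by ring.
  rewrite E.
  assert (B1 : Rabs (fy - F) < 1) by (eapply Rlt_le_trans; [apply H1| apply Rmin_l]).
  assert (B2 : Rabs (fy - F) < e / (2 * (Rabs G + 1))) by (eapply Rlt_le_trans; [apply H1| apply Rmin_r]).
  assert (Bf : Rabs fy <= Rabs F + 1).
  { replace fy with (F + (fy - F)) by ring. eapply Rle_trans; [apply Rabs_triang|]. lra. }
  eapply Rle_lt_trans; [apply Rabs_triang|]. rewrite !Rabs_mult.
  assert (T1 : Rabs fy * Rabs (gy - G) <= (Rabs F + 2) * (e / (2 * (Rabs F + 2)))).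
  { apply Rmult_le_compat; try apply Rabs_pos; lra. }
  assert (T2 : Rabs G * Rabs (fy - F) <= (Rabs G + 1) * (e / (2 * (Rabs G + 1)))).
  { apply Rmult_le_compat; try apply Rabs_pos; lra. }
  assert (E1 : (Rabs F + 2) * (e / (2 * (Rabs F + 2))) = e/2) by (field; lra).
  assert (E2 : (Rabs G + 1) * (e / (2 * (Rabs G + 1))) = e/2) by (field; lra).
  assert (T3 : Rabs fy * Rabs (gy - G) < e/2 \/ Rabs G * Rabs (fy - F) < e/2).
  { destruct (Req_dec (Rabs (gy - G)) 0).
    - left. rewrite H, Rmult_0_r. lra.
    - left. apply Rle_lt_trans with ((Rabs F + 1) * Rabs (gy - G)).
      + apply Rmult_le_compat_r; [apply Rabs_pos| lra].
      + apply Rlt_le_trans with ((Rabs F + 2) * Rabs (gy - G)).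
        * apply Rmult_lt_compat_r; [assert (0 <= Rabs (gy-G)) by apply Rabs_pos; lra | lra].
        * rewrite <- E1. apply Rmult_le_compat_l; lra. }
  destruct T3; lra. Qed.
Lemma rc2_scal c f : rc2 f -> rc2 (fun x u => c * f x u).
Proof. intros; apply rc2_mult; auto; apply rc2_const. Qed.

Ltac rc2_t := repeat first [ apply rc2_const | apply rc2_fst | apply rc2_snd | apply rc2_plus | apply rc2_minus | apply rc2_mult | apply rc2_opp | apply rc2_min | apply rc2_max ].



Section Top.
Context {X : TopSpace}.

Lemma cont_on_comp (f : R -> X) (phi : R -> R) (D D' : R -> Prop) :
  cont_on f D -> rc2 (fun x _ => phi x) -> (forall x, D' x -> D (phi x)) ->
  cont_on (fun x => f (phi x)) D'.
Proof. intros Hf Hp HD U HU x Hx Hux.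
  destruct (Hf U HU (phi x) (HD x Hx) Hux) as [d [Hd H]].
  destruct (Hp x 0 d Hd) as [d' [Hd' H']].
  exists d'; split; auto; intros y Hy Hyx. apply H; auto.
  apply H' with (v := 0); auto; try (rewrite Rminus_0_r, Rabs_R0; auto). Qed.

Lemma cont_on2_of1 (f : R -> X) (phi : R -> R -> R) (D : R -> Prop) (D' : R -> R -> Prop) :
  cont_on f D -> rc2 phi -> (forall x u, D' x u -> D (phi x u)) ->
  cont_on2 (fun x u => f (phi x u)) D'.
Proof. intros Hf Hp HD U HU x u Hx Hux.
  destruct (Hf U HU (phi x u) (HD x u Hx) Hux) as [d [Hd H]].
  destruct (Hp x u d Hd) as [d' [Hd' H']].
  exists d'; split; [auto|]; intros y v Hy Hyx Hv. apply H; auto. Qed.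

Lemma cont_on2_comp (H : R -> R -> X) (p q : R -> R -> R) (D D' : R -> R -> Prop) :
  cont_on2 H D -> rc2 p -> rc2 q -> (forall x u, D' x u -> D (p x u) (q x u)) ->
  cont_on2 (fun x u => H (p x u) (q x u)) D'.
Proof. intros Hf Hp Hq HD U HU x u Hx Hux.
  destruct (Hf U HU (p x u) (q x u) (HD x u Hx) Hux) as [d [Hd H0]].
  destruct (Hp x u d Hd) as [d1 [Hd1 H1]].
  destruct (Hq x u d Hd) as [d2 [Hd2 H2]].
  exists (Rmin d1 d2); split; [apply Rmin_glb_lt; lra|]; intros y v Hy Hyx Hv.
  assert (A1 := Rmin_l d1 d2); assert (A2 := Rmin_r d1 d2).
  apply H0; auto; [apply H1|apply H2]; lra. Qed.

Lemma cont_on_of2 (H : R -> R -> X) (p q : R -> R) (D : R -> R -> Prop) (D' : R -> Prop) :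
  cont_on2 H D -> rc2 (fun x _ => p x) -> rc2 (fun x _ => q x) -> (forall x, D' x -> D (p x) (q x)) ->
  cont_on (fun x => H (p x) (q x)) D'.
Proof. intros Hf Hp Hq HD U HU x Hx Hux.
  destruct (Hf U HU (p x) (q x) (HD x Hx) Hux) as [d [Hd H0]].
  destruct (Hp x 0 d Hd) as [d1 [Hd1 H1]].
  destruct (Hq x 0 d Hd) as [d2 [Hd2 H2]].
  exists (Rmin d1 d2); split; [apply Rmin_glb_lt; lra|]; intros y Hy Hyx.
  assert (A1 := Rmin_l d1 d2); assert (A2 := Rmin_r d1 d2).
  assert (Z : Rabs (0 - 0) < Rmin d1 d2) by (rewrite Rminus_0_r, Rabs_R0; apply Rmin_glb_lt; lra).
  apply H0; auto; [apply (H1 y 0)|apply (H2 y 0)]; lra. Qed.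

Lemma cont_on2_const (c : X) (D : R -> R -> Prop) : cont_on2 (fun _ _ => c) D.
Proof. intros U HU x u Hx Hc. exists 1; split; [lra|]; auto. Qed.

Lemma cont_on2_sub (H : R -> R -> X) (D D' : R -> R -> Prop) : cont_on2 H D -> (forall x u, D' x u -> D x u) -> cont_on2 H D'.
Proof. intros Hf HD U HU x u Hx Hux. destruct (Hf U HU x u (HD x u Hx) Hux) as [d [Hd H0]].
  exists d; split; auto. Qed.

Lemma cont_on_sub (f : R -> X) (D D' : R -> Prop) : cont_on f D -> (forall x, D' x -> D x) -> cont_on f D'.
Proof. intros Hf HD U HU x Hx Hux. destruct (Hf U HU x (HD x Hx) Hux) as [d [Hd H0]].
  exists d; split; auto. Qed.

Lemma cont_on_ext (f g : R -> X) (D : R -> Prop) : cont_on f D -> (forall x, D x -> f x = g x) -> cont_on g D.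
Proof. intros Hf E U HU x Hx Hux. rewrite <- E in Hux by auto. destruct (Hf U HU x Hx Hux) as [d [Hd H0]].
  exists d; split; auto. intros y Hy Hyx; rewrite <- E; auto. Qed.

Lemma cont_on2_ext (f g : R -> R -> X) (D : R -> R -> Prop) : cont_on2 f D -> (forall x u, D x u -> f x u = g x u) -> cont_on2 g D.
Proof. intros Hf E U HU x u Hx Hux. rewrite <- E in Hux by auto. destruct (Hf U HU x u Hx Hux) as [d [Hd H0]].
  exists d; split; auto. intros y v Hy Hyx Hv; rewrite <- E; auto. Qed.

Lemma cont_on2_glue (H1 H2 : R -> R -> X) (D : R -> R -> Prop) m :
  cont_on2 H1 (fun x u => D x u /\ x <= m) -> cont_on2 H2 (fun x u => D x u /\ m <= x) ->
  (forall u, D m u -> H1 m u = H2 m u) ->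
  cont_on2 (fun x u => if Rle_dec x m then H1 x u else H2 x u) D.
Proof. intros C1 C2 E U HU x u Hx Hux.
  destruct (Rle_dec x m) as [Hxm|Hxm].
  - destruct (Req_dec x m) as [Em|Em].
    + subst x. destruct (C1 U HU m u (conj Hx (Rle_refl m)) Hux) as [d1 [Hd1 K1]].
      rewrite E in Hux by auto.
      destruct (C2 U HU m u (conj Hx (Rle_refl m)) Hux) as [d2 [Hd2 K2]].
      exists (Rmin d1 d2); split; [apply Rmin_glb_lt; lra|]; intros y v Hy Hyx Hv.
      assert (A1 := Rmin_l d1 d2); assert (A2 := Rmin_r d1 d2).
      destruct (Rle_dec y m); [apply K1|apply K2]; auto; try split; auto; lra.
    + destruct (C1 U HU x u (conj Hx Hxm) Hux) as [d1 [Hd1 K1]].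
      exists (Rmin d1 (m - x)); split; [apply Rmin_glb_lt; lra|]; intros y v Hy Hyx Hv.
      assert (A1 := Rmin_l d1 (m - x)); assert (A2 := Rmin_r d1 (m - x)).
      destruct (Rle_dec y m); [apply K1; auto; try split; auto; lra|].
      exfalso; rabs.
  - apply Rnot_le_lt in Hxm. assert (Hmx : m <= x) by lra. destruct (C2 U HU x u (conj Hx Hmx) Hux) as [d1 [Hd1 K1]].
    exists (Rmin d1 (x - m)); split; [apply Rmin_glb_lt; lra|]; intros y v Hy Hyx Hv.
    assert (A1 := Rmin_l d1 (x - m)); assert (A2 := Rmin_r d1 (x - m)).
    destruct (Rle_dec y m); [exfalso; rabs|apply Rnot_le_lt in n].

    apply K1; auto; try split; auto; lra. Qed.

Lemma cont_on2_swap (H : R -> R -> X) (D : R -> R -> Prop) : cont_on2 H D -> cont_on2 (fun u x => H x u) (fun u x => D x u).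
Proof. intros C U HU u x Hx Hux. destruct (C U HU x u Hx Hux) as [d [Hd K]].
  exists d; split; auto. Qed.

Lemma cont_on2_glue_u (H1 H2 : R -> R -> X) (D : R -> R -> Prop) m :
  cont_on2 H1 (fun x u => D x u /\ u <= m) -> cont_on2 H2 (fun x u => D x u /\ m <= u) ->
  (forall x, D x m -> H1 x m = H2 x m) ->
  cont_on2 (fun x u => if Rle_dec u m then H1 x u else H2 x u) D.
Proof. intros C1 C2 E.
  apply cont_on2_swap in C1, C2.
  pose proof (cont_on2_glue (fun u x => H1 x u) (fun u x => H2 x u) (fun u x => D x u) m C1 C2 E) as G.
  apply cont_on2_swap in G. exact G. Qed.

Lemma cont_on_glue (f1 f2 : R -> X) (D : R -> Prop) m :
  cont_on f1 (fun x => D x /\ x <= m) -> cont_on f2 (fun x => D x /\ m <= x) ->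
  (D m -> f1 m = f2 m) ->
  cont_on (fun x => if Rle_dec x m then f1 x else f2 x) D.
Proof. intros C1 C2 E.
  assert (G : cont_on2 (fun x (u:R) => if Rle_dec x m then f1 x else f2 x) (fun x _ => D x)).
  { apply (cont_on2_glue (fun x _ => f1 x) (fun x _ => f2 x) (fun x _ => D x) m).
    - apply (cont_on2_of1 f1 (fun x _ => x) (fun x => D x /\ x <= m)); [auto|apply rc2_fst|simpl; auto].
    - apply (cont_on2_of1 f2 (fun x _ => x) (fun x => D x /\ m <= x)); [auto|apply rc2_fst|simpl; auto].
    - auto. }
  pose proof (cont_on_of2 _ (fun x => x) (fun _ => 0) _ D G) as K. simpl in K.
  apply K; auto; [apply rc2_fst | apply rc2_const]. Qed.

End Top.


Section Hom.
Context {X : TopSpace}.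
Notation hom := (@path_homotopic X).

Lemma hom_ends (a b : R -> X) s t : hom a b s t -> s <= t -> a s = b s /\ a t = b t.
Proof. intros [H [_ [E1 E2]]] Hst.
  destruct (E1 s ltac:(lra)) as [_ B1]. destruct (E2 1 ltac:(lra)) as [A1 A2].
  destruct (E1 t ltac:(lra)) as [_ B2]. split; congruence. Qed.

Lemma hom_cont (a b : R -> X) s t : hom a b s t -> s <= t -> cont_on a (interval s t) /\ cont_on b (interval s t).
Proof. intros [H [C [E1 E2]]] Hst. split.
  - apply cont_on_ext with (f := fun x => H x 0).
    + apply (cont_on_of2 H (fun x => x) (fun _ => 0) _ (interval s t) C); [rc2_t|rc2_t|].
      intros x Hx; unfold interval in Hx; split; lra.
    + intros x Hx; apply E1; auto.
  - apply cont_on_ext with (f := fun x => H x 1).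
    + apply (cont_on_of2 H (fun x => x) (fun _ => 1) _ (interval s t) C); [rc2_t|rc2_t|].
      intros x Hx; unfold interval in Hx; split; lra.
    + intros x Hx; apply E1; auto.
Qed.


Lemma hom_point (a b : R -> X) t : a t = b t -> hom a b t t.
Proof. intros E. exists (fun _ _ => a t). split; [apply cont_on2_const|]. split.
  - intros x Hx. replace x with t by lra. auto.
  - intros; auto. Qed.

Lemma hom_ext (a b a' b' : R -> X) s t : hom a b s t -> s <= t ->
  (forall x, s <= x <= t -> a x = a' x /\ b x = b' x) -> hom a' b' s t.
Proof. intros [H [C [E1 E2]]] Hst E. exists H. split; [auto|]. split.
  - intros x Hx. destruct (E x Hx), (E1 x Hx). split; congruence.
  - intros u Hu. destruct (E s ltac:(lra)), (E t ltac:(lra)), (E2 u Hu). split; congruence. Qed.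

Lemma hom_refl (a : R -> X) s t : cont_on a (interval s t) -> hom a a s t.
Proof. intros C. exists (fun x _ => a x). split.
  - apply (cont_on2_of1 a (fun x _ => x) (interval s t)); [auto|rc2_t|]. intros x u [Hx _]; exact Hx.
  - split; intros; auto. Qed.

Lemma hom_sym (a b : R -> X) s t : hom a b s t -> s <= t -> hom b a s t.
Proof. intros Hh Hst. destruct (hom_ends a b s t Hh Hst) as [Es Et].
  destruct Hh as [H [C [E1 E2]]].
  exists (fun x u => H x (1 - u)). split.
  - apply (cont_on2_comp H (fun x _ => x) (fun _ u => 1 - u) _ _ C); [rc2_t|rc2_t|]. intros x u [Hx Hu]; split; lra.
  - split.
    + intros x Hx. replace (1 - 0) with 1 by ring. replace (1 - 1) with 0 by ring. destruct (E1 x Hx); split; auto.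
    + intros u Hu. destruct (E2 (1 - u) ltac:(lra)). split; congruence. Qed.

Lemma hom_trans (a b c : R -> X) s t : hom a b s t -> hom b c s t -> s <= t -> hom a c s t.
Proof. intros H1h H2h Hst. destruct (hom_ends a b s t H1h Hst) as [Es Et].
  destruct H1h as [H1 [C1 [E11 E12]]]. destruct H2h as [H2 [C2 [E21 E22]]].
  exists (fun x u => if Rle_dec u (1/2) then H1 x (2 * u) else H2 x (2 * u - 1)). split.
  - apply cont_on2_glue_u.
    + apply (cont_on2_comp H1 (fun x _ => x) (fun _ u => 2 * u) _ _ C1); [rc2_t|rc2_t|]. intros x u [[Hx Hu] Hm]; split; lra.
    + apply (cont_on2_comp H2 (fun x _ => x) (fun _ u => 2 * u - 1) _ _ C2); [rc2_t|rc2_t|]. intros x u [[Hx Hu] Hm]; split; lra.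
    + intros x [Hx _]. replace (2 * (1/2) - 1) with 0 by field. replace (2 * (1/2)) with 1 by field.
      destruct (E11 x Hx), (E21 x Hx); congruence.
  - split.
    + intros x Hx. destruct (Rle_dec 0 (1/2)); [|lra]. destruct (Rle_dec 1 (1/2)); [lra|].
      replace (2 * 0) with 0 by ring. replace (2 * 1 - 1) with 1 by ring.
      destruct (E11 x Hx), (E21 x Hx); split; auto.
    + intros u Hu. destruct (Rle_dec u (1/2)).
      * apply E12; lra.
      * destruct (E22 (2 * u - 1) ltac:(lra)). split; congruence. Qed.

Lemma hom_glue (a b : R -> X) s m t : s <= m -> m <= t -> hom a b s m -> hom a b m t -> hom a b s t.
Proof. intros Hsm Hmt H1h H2h.
  destruct H1h as [H1 [C1 [E11 E12]]]. destruct H2h as [H2 [C2 [E21 E22]]].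
  exists (fun x u => if Rle_dec x m then H1 x u else H2 x u). split.
  - apply cont_on2_glue.
    + apply (cont_on2_sub H1 _ _ C1). intros x u [[Hx Hu] Hm]; split; lra.
    + apply (cont_on2_sub H2 _ _ C2). intros x u [[Hx Hu] Hm]; split; lra.
    + intros u [_ Hu]. destruct (E12 u Hu), (E22 u Hu); congruence.
  - split.
    + intros x Hx. destruct (Rle_dec x m); [apply E11|apply E21]; lra.
    + intros u Hu. destruct (Rle_dec s m); [|lra]. destruct (Rle_dec t m).
      * replace t with m by lra. apply E12; auto.
      * destruct (E12 u Hu), (E22 u Hu); split; auto. Qed.

Lemma hom_reparam (f : R -> X) (phi psi : R -> R) p q s t :
  cont_on f (interval p q) -> rc2 (fun x _ => phi x) -> rc2 (fun x _ => psi x) ->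
  (forall x, s <= x <= t -> p <= phi x <= q /\ p <= psi x <= q) -> phi s = psi s -> phi t = psi t -> s <= t ->
  hom (fun x => f (phi x)) (fun x => f (psi x)) s t.
Proof. intros C Hp Hq R E1 E2 Hst.
  exists (fun x u => f ((1 - u) * phi x + u * psi x)). split.
  - apply (cont_on2_of1 f (fun x u => (1 - u) * phi x + u * psi x) (interval p q)); [auto| |].
    + apply rc2_plus; apply rc2_mult; try rc2_t; auto.
    + intros x u [Hx Hu]. destruct (R x Hx) as [[A1 A2] [A3 A4]]. unfold interval. split; nra.
  - split.
    + intros x Hx. split; f_equal; ring.
    + intros u Hu. split; f_equal; [rewrite E1|rewrite E2]; ring. Qed.

Lemma hom_comp (a b : R -> X) (lam : R -> R) p q s t : hom a b p q -> rc2 (fun x _ => lam x) ->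
  (forall x, s <= x <= t -> p <= lam x <= q) -> lam s = p -> lam t = q -> s <= t ->
  hom (fun x => a (lam x)) (fun x => b (lam x)) s t.
Proof. intros [H [C [E1 E2]]] Hl R Es Et Hst.
  exists (fun x u => H (lam x) u). split.
  - apply (cont_on2_comp H (fun x _ => lam x) (fun _ u => u) _ _ C); [auto|rc2_t|]. intros x u [Hx Hu]; split; auto.
  - split.
    + intros x Hx. apply E1; auto.
    + intros u Hu. rewrite Es, Et. apply E2; auto. Qed.

Lemma hom_neg (a b : R -> X) s t : hom a b s t -> hom (fun x => a (- x)) (fun x => b (- x)) (- t) (- s).
Proof. intros [H [C [E1 E2]]].
  exists (fun x u => H (- x) u). split.
  - apply (cont_on2_comp H (fun x _ => - x) (fun _ u => u) _ _ C); [rc2_t|rc2_t|]. intros x u [Hx Hu]; split; [lra|auto].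
  - split.
    + intros x Hx. apply E1; lra.
    + intros u Hu. rewrite !Ropp_involutive. destruct (E2 u Hu); split; auto. Qed.

Lemma hom_neg_inv (a b : R -> X) s t : hom (fun x => a (- x)) (fun x => b (- x)) (- t) (- s) -> s <= t -> hom a b s t.
Proof. intros Hh Hst. apply hom_neg in Hh. rewrite !Ropp_involutive in Hh.
  apply (hom_ext _ _ _ _ s t Hh Hst). intros; rewrite !Ropp_involutive; auto. Qed.

End Hom.


Section Canc.
Context {X : TopSpace}.
Notation hom := (@path_homotopic X).

Lemma hom_AC (c d : R -> X) x y t : x <= y -> y <= t -> hom c d x t ->
  (forall z, y <= z <= t -> c z = d z) -> hom c d x y.
Proof. intros Hxy Hyt Hh Eq.
  destruct (Req_dec x y) as [Exy|Exy].
  { subst y. apply hom_point. apply (hom_ends c d x t Hh); lra. }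
  assert (Hxt : x <= t) by lra.
  destruct (hom_cont c d x t Hh Hxt) as [Cc Cd].
  set (T := 2 * t - y).
  set (rho := fun z => Rmin z (2 * t - z)).
  set (sig := fun z => Rmin z y).
  assert (Hrho : rc2 (fun z _ => rho z)) by (unfold rho; rc2_t).
  assert (Hsig : rc2 (fun z _ => sig z)) by (unfold sig; rc2_t).
  assert (Rrho : forall z, x <= z <= T -> x <= rho z <= t).
  { intros z Hz; unfold rho, T in *; unfold Rmin; destruct Rle_dec; lra. }
  assert (Rsig : forall z, x <= z <= T -> x <= sig z <= t).
  { intros z Hz; unfold sig, T in *; unfold Rmin; destruct Rle_dec; lra. }
  assert (rx : rho x = x) by (unfold rho; apply Rmin_left; lra).
  assert (sx : sig x = x) by (unfold sig; apply Rmin_left; lra).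
  assert (rT : rho T = y) by (unfold rho, T; rewrite Rmin_right; lra).
  assert (sT : sig T = y) by (unfold sig, T; rewrite Rmin_right; lra).
  assert (HxT : x <= T) by (unfold T; lra).
  assert (S1 : hom (fun z => c (rho z)) (fun z => d (rho z)) x T).
  { apply hom_glue with t; [lra| unfold T; lra | |].
    - apply (hom_ext c d _ _ x t Hh Hxt). intros z Hz. unfold rho. rewrite Rmin_left by lra. auto.
    - assert (H1 : hom (fun z => c (rho z)) (fun z => c (rho z)) t T).
      { apply hom_refl. apply (cont_on_comp c rho (interval x t)); auto.
        intros z Hz; unfold interval in *; apply Rrho; lra. }
      apply (hom_ext _ _ _ _ t T H1); [unfold T; lra|]. intros z Hz. split; auto.
      apply Eq. unfold rho, T in *. rewrite Rmin_right by lra. lra. }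
  assert (S2 : hom (fun z => c (rho z)) (fun z => c (sig z)) x T).
  { apply (hom_reparam c rho sig x t x T Cc Hrho Hsig); [intros; split; auto | congruence | congruence | lra]. }
  assert (S3 : hom (fun z => d (rho z)) (fun z => d (sig z)) x T).
  { apply (hom_reparam d rho sig x t x T Cd Hrho Hsig); [intros; split; auto | congruence | congruence | lra]. }
  assert (S4 : hom (fun z => c (sig z)) (fun z => d (sig z)) x T).
  { apply hom_trans with (fun z => c (rho z)); auto. apply hom_sym; auto.
    apply hom_trans with (fun z => d (rho z)); auto. }
  set (k := (T - x) / (y - x)).
  assert (Hk : k * (y - x) = T - x) by (unfold k; field; lra).
  assert (Hk0 : 0 <= k) by (unfold k, T; apply Rlt_le, Rdiv_lt_0_compat; lra).
  set (lam := fun z => x + (z - x) * k).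
  assert (S5 : hom (fun z => c (sig (lam z))) (fun z => d (sig (lam z))) x y).
  { apply (hom_comp _ _ lam x T x y S4); [unfold lam; rc2_t | | | | lra].
    - intros z Hz; unfold lam. split; nra.
    - unfold lam; ring.
    - unfold lam; lra. }
  assert (Rsl : forall z, x <= z <= y -> x <= sig (lam z) <= t /\ x <= z <= t).
  { intros z Hz. unfold sig, lam. split; [|lra]. unfold Rmin; destruct Rle_dec; nra. }
  assert (sl0 : sig (lam x) = x) by (unfold sig, lam; rewrite Rmin_left; lra).
  assert (sl1 : sig (lam y) = y) by (unfold sig, lam; replace ((y - x) * k) with (T - x) by (rewrite Rmult_comm; symmetry; exact Hk); unfold T; rewrite Rmin_right; lra).
  assert (Hsl : rc2 (fun z _ => sig (lam z))) by (unfold sig, lam; rc2_t).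
  assert (S6 : hom (fun z => c (sig (lam z))) (fun z => c z) x y).
  { apply (hom_reparam c (fun z => sig (lam z)) (fun z => z) x t x y Cc Hsl); [rc2_t| intros z Hz; destruct (Rsl z Hz); split; auto | exact sl0 | exact sl1 | lra]. }
  assert (S7 : hom (fun z => d (sig (lam z))) (fun z => d z) x y).
  { apply (hom_reparam d (fun z => sig (lam z)) (fun z => z) x t x y Cd Hsl); [rc2_t| intros z Hz; destruct (Rsl z Hz); split; auto | exact sl0 | exact sl1 | lra]. }
  apply hom_trans with (fun z => c (sig (lam z))); [apply hom_sym; auto; lra| |lra].
  apply hom_trans with (fun z => d (sig (lam z))); auto; lra.
Qed.


Lemma hom_ACp (c d : R -> X) x y t : x <= y -> y <= t -> hom c d x t ->
  (forall z, x <= z <= y -> c z = d z) -> hom c d y t.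
Proof. intros Hxy Hyt Hh Eq. apply hom_neg in Hh.
  assert (K := hom_AC (fun z => c (- z)) (fun z => d (- z)) (- t) (- y) (- x) ltac:(lra) ltac:(lra) Hh).
  apply hom_neg_inv; [|lra]. apply K. intros z Hz. apply Eq. lra. Qed.

Lemma hom_PC (a b : R -> X) e x f : e <= x -> x <= f -> hom a b e f -> hom a b e x -> hom a b x f.
Proof. intros Hex Hxf H1 H2.
  destruct (hom_ends a b e x H2 Hex) as [_ Ex].
  destruct (hom_cont a b e f H1 ltac:(lra)) as [Ca Cb].
  set (cc := fun z => if Rle_dec z x then b z else a z).
  assert (K1 : hom a cc e f).
  { apply hom_glue with x; auto.
    - apply (hom_ext a b a cc e x H2 Hex). intros z Hz. unfold cc. destruct Rle_dec; [auto|lra].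
    - assert (R1 : hom a a x f) by (apply hom_refl; apply (cont_on_sub a _ _ Ca); unfold interval; intros; lra).
      apply (hom_ext a a a cc x f R1 Hxf). intros z Hz. unfold cc. destruct Rle_dec; [|auto].
      replace z with x by lra. auto. }
  assert (K2 : hom cc b e f) by (apply hom_trans with a; [apply hom_sym| |]; auto; lra).
  assert (K3 : hom cc b x f).
  { apply (hom_ACp cc b e x f Hex Hxf K2). intros z Hz; unfold cc; destruct Rle_dec; [auto|lra]. }
  apply (hom_ext cc b a b x f K3 Hxf). intros z Hz. unfold cc. destruct Rle_dec; [|auto].
  replace z with x by lra. auto. Qed.

Lemma hom_SC (a b : R -> X) e x f : e <= x -> x <= f -> hom a b e f -> hom a b x f -> hom a b e x.
Proof. intros Hex Hxf H1 H2.
  destruct (hom_ends a b x f H2 Hxf) as [Ex _].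
  destruct (hom_cont a b e f H1 ltac:(lra)) as [Ca Cb].
  set (cc := fun z => if Rle_dec x z then b z else a z).
  assert (K1 : hom a cc e f).
  { apply hom_glue with x; auto.
    - assert (R1 : hom a a e x) by (apply hom_refl; apply (cont_on_sub a _ _ Ca); unfold interval; intros; lra).
      apply (hom_ext a a a cc e x R1 Hex). intros z Hz. unfold cc. destruct Rle_dec; [|auto].
      replace z with x by lra. auto.
    - apply (hom_ext a b a cc x f H2 Hxf). intros z Hz. unfold cc. destruct Rle_dec; [auto|lra]. }
  assert (K2 : hom cc b e f) by (apply hom_trans with a; [apply hom_sym| |]; auto; lra).
  assert (K3 : hom cc b e x).
  { apply (hom_AC cc b e x f Hex Hxf K2). intros z Hz; unfold cc; destruct Rle_dec; [auto|lra]. }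
  apply (hom_ext cc b a b e x K3 Hex). intros z Hz. unfold cc. destruct Rle_dec; [|auto].
  replace z with x by lra. auto. Qed.

End Canc.


Section Loop.
Context {X : TopSpace}.
Notation hom := (@path_homotopic X).

Definition loopL (al be : R -> X) (s t : R) : R -> X :=
  fun r => if Rle_dec r (1/2) then be (t - 2 * r * (t - s)) else al (s + (2 * r - 1) * (t - s)).

Lemma loop_cont (al be : R -> X) s t : s <= t -> cont_on al (interval s t) -> cont_on be (interval s t) ->
  al s = be s -> cont_on (loopL al be s t) (interval 0 1).
Proof. intros Hst Ca Cb E. unfold loopL.
  apply cont_on_glue.
  - apply (cont_on_comp be (fun r => t - 2 * r * (t - s)) (interval s t)); [auto|rc2_t|].
    intros r [Hr Hm]; unfold interval in *; split; nra.
  - apply (cont_on_comp al (fun r => s + (2 * r - 1) * (t - s)) (interval s t)); [auto|rc2_t|].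
    intros r [Hr Hm]; unfold interval in *; split; nra.
  - intros _. replace (t - 2 * (1/2) * (t - s)) with s by field. replace (s + (2 * (1/2) - 1) * (t - s)) with s by field.
    auto. Qed.

Lemma loop_vals (al be : R -> X) s t r : s <= t -> 0 <= r <= 1 ->
  exists y, s <= y <= t /\ (loopL al be s t r = al y \/ loopL al be s t r = be y).
Proof. intros Hst Hr. unfold loopL. destruct Rle_dec.
  - exists (t - 2 * r * (t - s)). split; [nra|right; auto].
  - exists (s + (2 * r - 1) * (t - s)). split; [nra|left; auto]. Qed.

Lemma loop_0 (al be : R -> X) s t : loopL al be s t 0 = be t.
Proof. unfold loopL. destruct Rle_dec; [|lra]. f_equal; ring. Qed.
Lemma loop_1 (al be : R -> X) s t : loopL al be s t 1 = al t.
Proof. unfold loopL. destruct Rle_dec; [lra|]. f_equal; ring. Qed.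

Lemma loop_trick (al be : R -> X) s t : s < t -> al s = be s -> al t = be t ->
  trivial_loop (loopL al be s t) -> hom al be s t.
Proof. intros Hst Es Et [H [C [E1 E2]]].
  rewrite loop_0 in E1, E2. rewrite loop_1 in E2.
  set (P1 := fun u => Rmax 0 (Rmin 1 (2 - 3 * u))).
  set (P2 := fun u => Rmin 1 (Rmin (3 * u) (3 - 3 * u))).
  set (xx := fun y => (y - s) / (t - s)).
  assert (RP1 : forall u, 0 <= P1 u <= 1) by (intros; unfold P1, Rmax, Rmin; repeat destruct Rle_dec; lra).
  assert (RP2 : forall u, 0 <= u <= 1 -> 0 <= P2 u <= 1) by (intros; unfold P2, Rmax, Rmin; repeat destruct Rle_dec; lra).
  assert (Rxx : forall y, s <= y <= t -> 0 <= xx y <= 1).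
  { intros y Hy; unfold xx; split.
    - apply Rmult_le_pos; [lra| left; apply Rinv_0_lt_compat; lra].
    - apply Rmult_le_reg_r with (t - s); [lra|]. unfold Rdiv. rewrite Rmult_assoc, Rinv_l by lra. lra. }
  exists (fun y u => H (1/2 + xx y * (P1 u - 1/2)) (xx y * P2 u)). split.
  - apply (cont_on2_comp H (fun y u => 1/2 + xx y * (P1 u - 1/2)) (fun y u => xx y * P2 u) _ _ C);
      [unfold xx, P1; rc2_t | unfold xx, P2; rc2_t |].
    intros y u [Hy Hu]. specialize (Rxx y Hy). specialize (RP1 u). specialize (RP2 u Hu). split; nra.
  - assert (X0 : forall y, xx y * (t - s) = y - s) by (intros; unfold xx; field; lra).
    split.
    + intros y Hy. specialize (Rxx y Hy). 
      assert (A1 : P1 0 = 1) by (unfold P1, Rmax, Rmin; repeat destruct Rle_dec; lra).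
      assert (A2 : P2 0 = 0) by (unfold P2, Rmax, Rmin; repeat destruct Rle_dec; lra).
      assert (A3 : P1 1 = 0) by (unfold P1, Rmax, Rmin; repeat destruct Rle_dec; lra).
      assert (A4 : P2 1 = 0) by (unfold P2, Rmax, Rmin; repeat destruct Rle_dec; lra).
      rewrite A1, A2, A3, A4, !Rmult_0_r. split.
      * destruct (E1 (1/2 + xx y * (1 - 1/2)) ltac:(lra)) as [K _]. rewrite K. unfold loopL. destruct Rle_dec.
        -- assert (xx y = 0) by lra. assert (y = s) by (specialize (X0 y); rewrite H0 in X0; lra). subst y.
           rewrite Es, H0. f_equal. field.
        -- f_equal. specialize (X0 y). nra.
      * destruct (E1 (1/2 + xx y * (0 - 1/2)) ltac:(lra)) as [K _]. rewrite K. unfold loopL. destruct Rle_dec; [|lra].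
        f_equal. specialize (X0 y). nra.
    + intros u Hu.
      assert (xs : xx s = 0) by (unfold xx; field; lra).
      assert (xt : xx t = 1) by (unfold xx; field; lra).
      rewrite xs, xt, !Rmult_0_l, !Rmult_1_l. split.
      * destruct (E1 (1/2 + 0) ltac:(lra)) as [K _]. rewrite K. unfold loopL. destruct Rle_dec; [|lra].
        rewrite Es. f_equal. field.
      * replace (1/2 + (P1 u - 1/2)) with (P1 u) by ring.
        destruct (Rle_dec u (1/3)).
        -- assert (B1 : P1 u = 1) by (unfold P1, Rmax, Rmin; repeat destruct Rle_dec; lra).
           assert (B2 : P2 u = 3 * u) by (unfold P2, Rmax, Rmin; repeat destruct Rle_dec; lra).
           rewrite B1, B2. destruct (E2 (3 * u) ltac:(lra)) as [_ K]. exact K.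
        -- destruct (Rle_dec u (2/3)).
           ++ assert (B1 : P1 u = 2 - 3 * u) by (unfold P1, Rmax, Rmin; repeat destruct Rle_dec; lra).
              assert (B2 : P2 u = 1) by (unfold P2, Rmax, Rmin; repeat destruct Rle_dec; lra).
              rewrite B1, B2. destruct (E1 (2 - 3 * u) ltac:(lra)) as [_ K]. rewrite K. auto.
           ++ assert (B1 : P1 u = 0) by (unfold P1, Rmax, Rmin; repeat destruct Rle_dec; lra).
              assert (B2 : P2 u = 3 - 3 * u) by (unfold P2, Rmax, Rmin; repeat destruct Rle_dec; lra).
              rewrite B1, B2. destruct (E2 (3 - 3 * u) ltac:(lra)) as [K _]. rewrite K. auto.
Qed.

End Loop.


Lemma not_closure (A : R -> Prop) x : ~ closure_R A x -> exists e, 0 < e /\ forall y, A y -> e <= Rabs (y - x).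
Proof. intros Hn. apply NNPP. intros Hne. apply Hn. intros e He.
  apply NNPP. intros Hy. apply Hne. exists e. split; auto. intros y Ay.
  apply Rnot_lt_le. intros Hlt. apply Hy. exists y; auto. Qed.

Lemma comp_endpoints (S0 : R -> Prop) c d : closed_R S0 -> S0 0 -> S0 1 -> c < d ->
  is_component (fun x => 0 <= x <= 1 /\ ~ S0 x) (fun x => c < x < d) ->
  0 <= c /\ d <= 1 /\ S0 c /\ S0 d.
Proof. intros Cl S00 S01 Hcd [_ [Sub [_ Max]]].
  assert (Hc : 0 <= c).
  { apply Rnot_lt_le; intros Hc. destruct (Sub ((c + Rmin d 0)/2)) as [[H1 _] _].
    - assert (Rmin d 0 <= d) by apply Rmin_l. assert (Rmin d 0 <= 0) by apply Rmin_r.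
      assert (c < Rmin d 0) by (apply Rmin_glb_lt; lra). lra.
    - assert (Rmin d 0 <= 0) by apply Rmin_r. lra. }
  assert (Hd : d <= 1).
  { apply Rnot_lt_le; intros Hd. destruct (Sub ((d + Rmax c 1)/2)) as [[_ H1] _].
    - assert (c <= Rmax c 1) by apply Rmax_l. assert (1 <= Rmax c 1) by apply Rmax_r.
      assert (Rmax c 1 < d) by (apply Rmax_lub_lt; lra). lra.
    - assert (1 <= Rmax c 1) by apply Rmax_r. lra. }
  split; [auto|split;[auto|split]].
  - apply NNPP; intros Nc. assert (c <> 0) by (intro; subst; auto).
    assert (Nc' : ~ closure_R S0 c) by (intro K; apply Nc; apply Cl; auto).
    destruct (not_closure S0 c Nc') as [e [He Ke]].
    set (e' := Rmin e c). assert (e' <= e) by apply Rmin_l. assert (e' <= c) by apply Rmin_r.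
    assert (0 < e') by (apply Rmin_glb_lt; lra).
    assert (K : c < c - e'/4 < d).
    { apply (Max (fun x => c - e'/2 < x < d)).
      - intros; lra.
      - intros x Hx. destruct (Rlt_or_le c x).
        + apply Sub; lra.
        + split; [lra|]. intros Sx. specialize (Ke x Sx). unfold Rabs in Ke; destruct Rcase_abs in Ke; lra.
      - intros; lra.
      - lra. }
    lra.
  - apply NNPP; intros Nc. assert (d <> 1) by (intro; subst; auto).
    assert (Nc' : ~ closure_R S0 d) by (intro K; apply Nc; apply Cl; auto).
    destruct (not_closure S0 d Nc') as [e [He Ke]].
    set (e' := Rmin e (1 - d)). assert (e' <= e) by apply Rmin_l. assert (e' <= 1 - d) by apply Rmin_r.
    assert (0 < e') by (apply Rmin_glb_lt; lra).
    assert (K : c < d + e'/4 < d).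
    { apply (Max (fun x => c < x < d + e'/2)).
      - intros; lra.
      - intros x Hx. destruct (Rlt_or_le x d).
        + apply Sub; lra.
        + split; [lra|]. intros Sx. specialize (Ke x Sx). unfold Rabs in Ke; destruct Rcase_abs in Ke; lra.
      - intros; lra.
      - lra. }
    lra.
Qed.

Lemma comp_gap (A : R -> Prop) l r : l < r -> A l -> A r -> 0 <= l -> r <= 1 ->
  (forall y, l < y < r -> ~ A y) -> is_component (fun x => 0 <= x <= 1 /\ ~ A x) (fun x => l < x < r).
Proof. intros Hlr Al Ar H0 H1 Gap. split; [exists ((l+r)/2); lra|]. split; [intros x Hx; split; [lra|apply Gap; auto]|].
  split; [intros; lra|]. intros C' Inc Sub Conv x Cx.
  assert (Cm : C' ((l+r)/2)) by (apply Inc; lra).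
  split.
  - apply Rnot_le_lt; intros Hx. assert (C' l) by (apply (Conv x l ((l+r)/2)); auto; lra).
    apply (Sub l); auto.
  - apply Rnot_le_lt; intros Hx. assert (C' r) by (apply (Conv ((l+r)/2) r x); auto; lra).
    apply (Sub r); auto. Qed.

Lemma next_point (A : R -> Prop) R0 q : closed_R A -> A q -> R0 < q ->
  (exists e, 0 < e /\ forall y, A y -> R0 < y -> R0 + e <= y) ->
  exists g, A g /\ R0 < g <= q /\ forall y, R0 < y < g -> ~ A y.
Proof. intros Cl Aq Hq [e [He Ke]].
  set (T := fun z => forall y, A y -> R0 < y -> z <= y).
  destruct (completeness T) as [g [Ub Lub]].
  { exists q. intros z Tz. apply Tz; auto. }
  { exists (R0 + e). intros y Ay Hy. apply Ke; auto. }
  assert (Hg1 : R0 + e <= g) by (apply Ub; intros y Ay Hy; apply Ke; auto).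
  assert (Hg2 : g <= q) by (apply Lub; intros z Tz; apply Tz; auto).
  assert (Up : forall y, A y -> R0 < y -> g <= y) by (intros y Ay Hy; apply Lub; intros z Tz; apply Tz; auto).
  exists g. split; [|split; [lra|]].
  - apply Cl. intros ep Hep. apply NNPP; intros Hn.
    assert (T (g + ep)).
    { intros y Ay Hy. specialize (Up y Ay Hy). apply Rnot_lt_le; intros Hlt. apply Hn. exists y. split; auto.
      unfold Rabs; destruct Rcase_abs; lra. }
    specialize (Ub _ H). lra.
  - intros y Hy Ay. specialize (Up y Ay ltac:(lra)). lra. Qed.

Lemma prev_point (A : R -> Prop) p x0 : closed_R A -> A p -> p <= x0 ->
  exists l, A l /\ p <= l <= x0 /\ forall y, l < y <= x0 -> ~ A y.
Proof. intros Cl Ap Hp.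
  set (T := fun y => A y /\ p <= y <= x0).
  destruct (completeness T) as [l [Ub Lub]].
  { exists x0. intros z Tz. apply Tz. }
  { exists p. split; auto; lra. }
  assert (Hl1 : p <= l) by (apply Ub; split; auto; lra).
  assert (Hl2 : l <= x0) by (apply Lub; intros z Tz; apply Tz).
  exists l. split; [|split; [lra|]].
  - apply Cl. intros ep Hep. apply NNPP; intros Hn.
    assert (l - ep >= l).
    { apply Rle_ge, Lub. intros z [Az Hz]. apply Rnot_lt_le; intros Hlt. apply Hn. exists z. split; auto.
      assert (z <= l) by (apply Ub; split; auto). unfold Rabs; destruct Rcase_abs; lra. }
    lra.
  - intros y Hy Ay. assert (y <= l) by (apply Ub; split; auto; lra). lra. Qed.


Lemma min_nat (P : nat -> Prop) : (exists n, P n) -> exists n, P n /\ forall m, (m < n)%nat -> ~ P m.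
Proof. intros [n Hn]. induction n as [n IH] using (well_founded_induction Wf_nat.lt_wf).
  destruct (classic (exists m, (m < n)%nat /\ P m)) as [[m [Hm Pm]]|No].
  - apply (IH m Hm Pm).
  - exists n. split; auto. intros m Hm Pm. apply No. exists m; auto. Qed.

Section HS.
Variable z : nat -> R.
Hypothesis zinc : forall n, z n < z (S n).

Lemma z_lt m n : (m < n)%nat -> z m < z n.
Proof. induction n; intros H; [lia|]. destruct (Nat.eq_dec m n); [subst; auto|].
  apply Rlt_trans with (z n); auto. apply IHn; lia. Qed.
Lemma z_le m n : (m <= n)%nat -> z m <= z n.
Proof. intros H. destruct (Nat.eq_dec m n); [subst; lra|]. left; apply z_lt; lia. Qed.

Lemma locate x : z 0%nat <= x -> forall N, x < z N -> exists n, z n <= x < z (S n).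
Proof. intros H0 N. induction N; intros HN; [lra|].
  destruct (Rle_or_lt (z N) x); [exists N; lra|]. apply IHN; auto. Qed.
End HS.

Section HS01.
Context {X : TopSpace}.
Notation hom := (@path_homotopic X).

Lemma HS01 (Hx : well_defined_scattered_products X) (a b : R -> X) (z : nat -> R) :
  is_path a 0 1 -> is_path b 0 1 -> z 0%nat = 0 -> (forall n, z n < z (S n)) -> (forall n, z n < 1) ->
  (forall e, 0 < e -> exists n, 1 - e < z n) -> (forall n, hom a b (z n) (z (S n))) -> a 1 = b 1 ->
  hom a b 0 1.
Proof. intros Pa Pb z0 zinc z1 zconv Hz E1.
  set (SS := fun x => x = 1 \/ exists n, x = z n).
  assert (zge : forall n, 0 <= z n) by (intro n; rewrite <- z0; apply z_le; auto; lia).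
  assert (zLt := z_lt z zinc). assert (zLe := z_le z zinc).
  assert (Clo : closed_R SS).
  { intros x Cx. apply NNPP; intros Nx.
    destruct (Rlt_or_le x 0) as [Hx0|Hx0].
    { destruct (Cx (- x) ltac:(lra)) as [y [[->|[n ->]] Hy]]; unfold Rabs in Hy; destruct Rcase_abs in Hy;
        try specialize (zge n); lra. }
    destruct (Rlt_or_le 1 x) as [Hx1|Hx1].
    { destruct (Cx (x - 1) ltac:(lra)) as [y [[->|[n ->]] Hy]]; unfold Rabs in Hy; destruct Rcase_abs in Hy;
        try specialize (z1 n); lra. }
    assert (x <> 1) by (intro; apply Nx; left; auto).
    destruct (zconv (1 - x) ltac:(lra)) as [N HN].
    destruct (locate z x ltac:(lra) N ltac:(lra)) as [n [Hn1 Hn2]].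
    assert (z n <> x) by (intro; apply Nx; right; exists n; auto).
    set (e := Rmin (x - z n) (z (S n) - x)).
    assert (e <= x - z n) by apply Rmin_l. assert (e <= z (S n) - x) by apply Rmin_r.
    assert (0 < e) by (apply Rmin_glb_lt; lra).
    destruct (Cx e ltac:(lra)) as [y [[->|[m ->]] Hy]].
    - specialize (z1 (S n)). unfold Rabs in Hy; destruct Rcase_abs in Hy; lra.
    - destruct (Compare_dec.le_lt_dec m n) as [Hm|Hm].
      + specialize (zLe m n Hm). unfold Rabs in Hy; destruct Rcase_abs in Hy; lra.
      + specialize (zLe (S n) m Hm). unfold Rabs in Hy; destruct Rcase_abs in Hy; lra. }
  apply Hx; auto. exists SS. split.
  -
    intros Y Sub [y0 Y0].
    destruct (classic (exists n, Y (z n))) as [Ex|Nex].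
    + destruct (min_nat (fun n => Y (z n)) Ex) as [n [Yn Mn]].
      exists (z n). split; auto. exists (z (S n) - z n). split; [specialize (zinc n); lra|].
      intros w Yw Hw. destruct (Sub w Yw) as [->|[m ->]].
      * specialize (z1 (S n)). unfold Rabs in Hw; destruct Rcase_abs in Hw; lra.
      * destruct (Compare_dec.lt_eq_lt_dec m n) as [[Hm|Hm]|Hm].
        -- exfalso; apply (Mn m Hm Yw).
        -- subst; auto.
        -- specialize (zLe (S n) m Hm). unfold Rabs in Hw; destruct Rcase_abs in Hw; lra.
    + exists y0. split; auto. exists 1. split; [lra|]. intros w Yw Hw.
      destruct (Sub w Yw) as [->|[m ->]]; [|exfalso; apply Nex; exists m; auto].
      destruct (Sub y0 Y0) as [->|[m ->]]; [auto|exfalso; apply Nex; exists m; auto].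
  - split; [|split; [auto|split; [|split; [|split; [|split]]]]].
    + intros x [->|[n ->]]; [lra|]. split; [auto|left; auto].
    +
      intros [x [e [He All]]].
      assert (AllS : forall y, Rabs (y - x) < e -> SS y) by (intros y Hy; apply Clo; apply All; auto).
      set (w := if Req_EM_T x 1 then x - e/2 else x).
      assert (Hw1 : w <> 1) by (unfold w; destruct Req_EM_T; lra).
      assert (Hwx : Rabs (w - x) < e) by (unfold w; destruct Req_EM_T; unfold Rabs; destruct Rcase_abs; lra).
      destruct (AllS w Hwx) as [E|[n En]]; [contradiction|].
      set (dl := Rmin (e - Rabs (w - x)) (z (S n) - z n) / 2).
      assert (Rmin (e - Rabs (w - x)) (z (S n) - z n) <= e - Rabs (w - x)) by apply Rmin_l.
      assert (Rmin (e - Rabs (w - x)) (z (S n) - z n) <= z (S n) - z n) by apply Rmin_r.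
      assert (0 < Rmin (e - Rabs (w - x)) (z (S n) - z n)) by (apply Rmin_glb_lt; specialize (zinc n); lra).
      assert (Hw' : Rabs (w + dl - x) < e).
      { replace (w + dl - x) with ((w - x) + dl) by ring. eapply Rle_lt_trans; [apply Rabs_triang|].
        rewrite (Rabs_right dl); unfold dl; lra. }
      destruct (AllS _ Hw') as [E|[m Em]].
      * specialize (z1 (S n)). unfold dl in E. lra.
      * destruct (Compare_dec.le_lt_dec m n) as [Hm|Hm].
        -- specialize (zLe m n Hm). unfold dl in Em. lra.
        -- specialize (zLe (S n) m Hm). unfold dl in Em. lra.
    + right; exists 0%nat; auto.
    + left; auto.
    + intros x [->|[n ->]]; auto. apply (hom_ends a b _ _ (Hz n)). left; auto.
    + intros c d Hcd Comp.
      destruct (comp_endpoints SS c d Clo ltac:(right; exists 0%nat; auto) ltac:(left; auto) Hcd Comp)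
        as [Hc [Hd [Sc Sd]]].
      destruct Comp as [_ [Sub _]].
      destruct Sc as [->|[n ->]]; [lra|].
      destruct Sd as [->|[m ->]].
      * exfalso. destruct (Sub (z (S n))) as [_ K]; [split; auto|]. apply K. right; exists (S n); auto.
      * destruct (Compare_dec.lt_eq_lt_dec m (S n)) as [[Hm|Hm]|Hm].
        -- specialize (zLe m n ltac:(lia)). lra.
        -- subst; auto.
        -- exfalso. destruct (Sub (z (S n))) as [_ K]; [split; auto; apply zLt; lia|]. apply K. right; exists (S n); auto.
Qed.
End HS01.


Lemma divk_lt p q k : 0 < k -> p < q -> p / k < q / k.
Proof. intros Hk H. unfold Rdiv. apply Rmult_lt_compat_r; [apply Rinv_0_lt_compat|]; lra. Qed.
Lemma divk_le p q k : 0 < k -> p <= q -> p / k <= q / k.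
Proof. intros Hk H. unfold Rdiv. apply Rmult_le_compat_r; [left; apply Rinv_0_lt_compat|]; lra. Qed.

Fixpoint zseq (f : R -> R) (p d : R) (n : nat) : R :=
  match n with O => p | S m => f (Rmax (zseq f p d m) (d - / INR (S m))) end.

Section HSg.
Context {X : TopSpace}.
Notation hom := (@path_homotopic X).

Lemma HS (Hx : well_defined_scattered_products X) (a b : R -> X) (z : nat -> R) s t :
  s < t -> cont_on a (interval s t) -> cont_on b (interval s t) ->
  z 0%nat = s -> (forall n, z n < z (S n)) -> (forall n, z n < t) ->
  (forall e, 0 < e -> exists n, t - e < z n) -> (forall n, hom a b (z n) (z (S n))) -> a t = b t ->
  hom a b s t.
Proof. intros Hst Ca Cb z0 zinc zt zconv Hz Et.
  set (lam := fun x => s + x * (t - s)).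
  set (z' := fun n => (z n - s) / (t - s)).
  assert (Ez : forall n, lam (z' n) = z n) by (intros; unfold lam, z'; field; lra).
  assert (Hl : rc2 (fun x _ => lam x)) by (unfold lam; rc2_t).
  assert (Rl : forall x, 0 <= x <= 1 -> s <= lam x <= t) by (intros; unfold lam; split; nra).
  assert (P : hom (fun x => a (lam x)) (fun x => b (lam x)) 0 1).
  { apply (HS01 Hx _ _ z').
    - split; [lra|]. apply (cont_on_comp a lam (interval s t)); auto; try (intros x Hx'; apply Rl; auto).
    - split; [lra|]. apply (cont_on_comp b lam (interval s t)); auto; try (intros x Hx'; apply Rl; auto).
    - unfold z'. rewrite z0. unfold Rdiv; ring.
    - intros n; unfold z'; apply divk_lt; [lra|]. specialize (zinc n); lra.
    - intros n; unfold z'. replace 1 with ((t - s) / (t - s)) by (field; lra). apply divk_lt; [lra|]. specialize (zt n); lra.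
    - intros e He. destruct (zconv (e * (t - s))) as [n Hn]; [nra|]. exists n. unfold z'.
      replace (1 - e) with ((1 - e) * (t - s) / (t - s)) by (field; lra). apply divk_lt; [lra|]. nra.
    - intros n. apply (hom_comp a b lam (z n) (z (S n))); auto.
      + intros x Hx'. rewrite <- (Ez n), <- (Ez (S n)). unfold lam. split; nra.
      + specialize (zinc n). left; unfold z'; apply divk_lt; lra.
    - unfold lam. replace (s + 1 * (t - s)) with t by ring. auto. }
  set (mu := fun y => (y - s) / (t - s)).
  assert (Q := hom_comp _ _ mu 0 1 s t P ltac:(unfold mu; rc2_t)).
  assert (Q' : hom (fun y => a (lam (mu y))) (fun y => b (lam (mu y))) s t).
  { apply Q; [|unfold mu; field; lra|unfold mu; field; lra|lra].
    intros x Hx'. unfold mu. split.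
    - replace 0 with (0 / (t - s)) by (field; lra). apply divk_le; lra.
    - replace 1 with ((t - s) / (t - s)) by (field; lra). apply divk_le; lra. }
  apply (hom_ext _ _ _ _ s t Q' ltac:(lra)). intros y Hy.
  assert (lam (mu y) = y) by (unfold lam, mu; field; lra). rewrite H. auto. Qed.

Lemma RL (Hx : well_defined_scattered_products X) (A0 : R -> Prop) (a0 b0 : R -> X) p d :
  closed_R A0 -> A0 p -> p < d -> cont_on a0 (interval p d) -> cont_on b0 (interval p d) -> a0 d = b0 d -> A0 d ->
  (forall x y, A0 x -> A0 y -> p <= x <= y -> y < d -> hom a0 b0 x y) ->
  (forall l r, A0 l -> A0 r -> p <= l -> l < r -> r <= d -> (forall y, l < y < r -> ~ A0 y) -> hom a0 b0 l r) ->
  hom a0 b0 p d.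
Proof. intros Cl Ap Hpd Ca Cb Ed Ad Pair Gap.
  destruct (classic (forall x, x < d -> exists y, A0 y /\ x < y < d)) as [Acc|NAcc].
  - assert (Hn : forall x, exists y, x < d -> A0 y /\ x < y < d).
    { intros x. destruct (Rlt_dec x d) as [Hl|Hl].
      - destruct (Acc x Hl) as [y Hy]. exists y; auto.
      - exists 0. intros; contradiction. }
    set (f := fun x => proj1_sig (constructive_indefinite_description _ (Hn x))).
    assert (Pf : forall x, x < d -> A0 (f x) /\ x < f x < d).
    { intros x Hxd. unfold f. destruct (constructive_indefinite_description _ (Hn x)) as [y Hy]. simpl. auto. }
    set (z := zseq f p d).
    assert (Zp : forall n, A0 (z n) /\ p <= z n < d).
    { induction n; [change (z 0%nat) with p; split; [auto|lra]|]. change (z (S n)) with (f (Rmax (z n) (d - / INR (S n)))).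
      assert (Rmax (z n) (d - / INR (S n)) < d).
      { apply Rmax_lub_lt; [lra|]. assert (0 < / INR (S n)) by (apply Rinv_0_lt_compat, lt_0_INR; lia). lra. }
      destruct (Pf _ H) as [A1 A2]. assert (z n <= Rmax (z n) (d - / INR (S n))) by apply Rmax_l.
      split; [auto|lra]. }
    assert (Zs : forall n, z n < z (S n) /\ d - / INR (S n) < z (S n)).
    { intros n. change (z (S n)) with (f (Rmax (z n) (d - / INR (S n)))). assert (Rmax (z n) (d - / INR (S n)) < d).
      { apply Rmax_lub_lt; [apply Zp|]. assert (0 < / INR (S n)) by (apply Rinv_0_lt_compat, lt_0_INR; lia). lra. }
      destruct (Pf _ H) as [A1 A2]. assert (z n <= Rmax (z n) (d - / INR (S n))) by apply Rmax_l.
      assert (d - / INR (S n) <= Rmax (z n) (d - / INR (S n))) by apply Rmax_r. split; lra. }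
    apply (HS Hx a0 b0 z p d Hpd Ca Cb eq_refl).
    + intros n; apply Zs.
    + intros n; apply Zp.
    + intros e He. destruct (archimed_cor1 e He) as [N [HN1 HN2]]. exists N.
      destruct N; [lia|]. destruct (Zs N). lra.
    + intros n. destruct (Zp n), (Zp (S n)), (Zs n). apply Pair; auto; lra.
    + auto.
  - apply not_all_ex_not in NAcc. destruct NAcc as [x Hx'].
    apply imply_to_and in Hx'. destruct Hx' as [Hxd Nx].
    destruct (prev_point A0 p (Rmax x p) Cl Ap (Rmax_r x p)) as [l [Al [Hl Gl]]].
    assert (Rmax x p < d) by (apply Rmax_lub_lt; lra).
    assert (Gl' : forall y, l < y < d -> ~ A0 y).
    { intros y Hy Ay. destruct (Rle_or_lt y (Rmax x p)).
      - apply (Gl y); auto; lra.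
      - apply Nx. exists y. split; auto. assert (x <= Rmax x p) by apply Rmax_l. lra. }
    apply hom_glue with l; [lra|lra| |].
    + apply Pair; auto; lra.
    + apply Gap; auto; lra.
Qed.
End HSg.


Lemma seq_choice (P : nat -> R -> Prop) : (forall n, exists e, P n e) -> exists g, forall n, P n (g n).
Proof. intros H. exists (fun n => proj1_sig (constructive_indefinite_description _ (H n))).
  intros n. destruct (constructive_indefinite_description _ (H n)); simpl; auto. Qed.

Lemma closed_neg (A : R -> Prop) : closed_R A -> closed_R (fun x => A (- x)).
Proof. intros Cl x Cx. apply Cl. intros e He. destruct (Cx e He) as [y [Ay Hy]].
  exists (- y). split; auto. replace (- y - - x) with (- (y - x)) by ring. rewrite Rabs_Ropp; auto. Qed.

Lemma inv_small (d : R) : 0 < d -> exists N, forall n, (N <= n)%nat -> / INR (S n) < d.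
Proof. intros Hd. destruct (archimed_cor1 d Hd) as [N [HN1 HN2]]. exists N. intros n Hn.
  eapply Rle_lt_trans; [|apply HN1]. apply Rinv_le_contravar; [apply lt_0_INR; lia|apply le_INR; lia]. Qed.

Section Null.
Context {X : TopSpace}.
Notation hom := (@path_homotopic X).

Lemma null_from (x0 : X) (al be : nat -> R -> X) (s t : nat -> R) :
  (forall n, s n < t n) -> (forall n, cont_on (al n) (interval (s n) (t n))) -> (forall n, cont_on (be n) (interval (s n) (t n))) ->
  (forall n, al n (s n) = be n (s n)) -> (forall n, al n (t n) = x0 /\ be n (t n) = x0) ->
  (forall n, ~ hom (al n) (be n) (s n) (t n)) ->
  (forall U, is_open X U -> U x0 -> exists N, forall n, (N <= n)%nat -> forall y, s n <= y <= t n -> U (al n y) /\ U (be n y)) ->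
  aw X x0.
Proof. intros Hst Ca Cb Es Et Nh Nu.
  exists (fun n => loopL (al n) (be n) (s n) (t n)). split; [split|].
  - intros n. split; [split; [lra|]|].
    + apply loop_cont; auto. left; auto.
    + rewrite loop_0, loop_1. destruct (Et n); auto.
  - intros U HU Ux. destruct (Nu U HU Ux) as [N HN]. exists N. intros n Hn r Hr.
    destruct (loop_vals (al n) (be n) (s n) (t n) r ltac:(left; auto) Hr) as [y [Hy [E|E]]]; rewrite E;
      apply (HN n Hn y Hy).
  - intros n Ht. apply (Nh n). apply loop_trick; auto. destruct (Et n) as [E1 E2]; congruence.
Qed.
End Null.


Section Main.
Context {X : TopSpace}.
Notation hom := (@path_homotopic X).
Variable Hx : well_defined_scattered_products X.
Variables (a b : R -> X) (A : R -> Prop).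
Hypothesis Pa : is_path a 0 1.
Hypothesis Pb : is_path b 0 1.
Hypothesis HA : htpy_cut_set a b 0 1 A.

Definition Bset : R -> Prop := fun t => A t /\ ~ (0 < t < 1 /\ exists ep, 0 < ep /\
  forall e f, A e -> A f -> t - ep < e -> e <= f -> f < t + ep -> hom a b e f).

Lemma A01 : forall x, A x -> 0 <= x <= 1. Proof. apply HA. Qed.
Lemma Acl : closed_R A. Proof. apply HA. Qed.
Lemma Aeq : forall x, A x -> a x = b x. Proof. apply HA. Qed.
Lemma Ca : cont_on a (interval 0 1). Proof. apply Pa. Qed.
Lemma Cb : cont_on b (interval 0 1). Proof. apply Pb. Qed.

Lemma Ca_sub s t : 0 <= s -> t <= 1 -> cont_on a (interval s t).
Proof. intros. apply (cont_on_sub a _ _ Ca). unfold interval; intros; lra. Qed.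
Lemma Cb_sub s t : 0 <= s -> t <= 1 -> cont_on b (interval s t).
Proof. intros. apply (cont_on_sub b _ _ Cb). unfold interval; intros; lra. Qed.

Lemma gapA l r : A l -> A r -> l < r -> (forall y, l < y < r -> ~ A y) -> hom a b l r.
Proof. intros Al Ar Hlr G. destruct HA as [_ [_ [_ [_ [_ [_ Comp]]]]]]. apply Comp; auto.
  apply comp_gap; auto; [apply (A01 l Al)|apply (A01 r Ar)]. Qed.

Lemma B_closed : closed_R Bset.
Proof. intros x Cx.
  assert (Ax : A x).
  { apply Acl. intros e He. destruct (Cx e He) as [y [[Ay _] Hy]]. exists y; auto. }
  split; auto. intros [Hx01 [ep [Hep W]]].
  set (dl := Rmin (ep/2) (Rmin x (1 - x))).
  assert (dl <= ep/2) by apply Rmin_l. assert (dl <= Rmin x (1 - x)) by apply Rmin_r.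
  assert (Rmin x (1 - x) <= x) by apply Rmin_l. assert (Rmin x (1 - x) <= 1 - x) by apply Rmin_r.
  assert (0 < dl) by (apply Rmin_glb_lt; [lra|apply Rmin_glb_lt; lra]).
  destruct (Cx dl H3) as [y [[Ay Ny] Hy]]. apply Ny.
  assert (-dl < y - x < dl) by (unfold Rabs in Hy; destruct Rcase_abs in Hy; lra).
  split; [lra|]. exists (ep/2). split; [lra|]. intros e f Ae Af Q1 Q2 Q3. apply W; auto; lra. Qed.

Lemma Bzero : Bset 0. Proof. split; [apply HA|lra]. Qed.
Lemma Bone : Bset 1. Proof. split; [apply HA|lra]. Qed.

Lemma Klem c d : c < d -> (forall y, c < y < d -> ~ Bset y) ->
  forall p q, A p -> A q -> c < p -> p <= q -> q < d -> hom a b p q.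
Proof. intros Hcd NB p q Ap Aq Hcp Hpq Hqd.
  set (T := fun x => A x /\ p <= x <= q /\ hom a b p x).
  destruct (completeness T) as [R0 [Ub Lub]].
  { exists q. intros z Tz. apply Tz. }
  { exists p. split; [auto|split; [lra|]]. apply hom_point, Aeq; auto. }
  assert (HR1 : p <= R0) by (apply Ub; split; [auto|split; [lra|apply hom_point, Aeq; auto]]).
  assert (HR2 : R0 <= q) by (apply Lub; intros z Tz; apply Tz).
  assert (Approx : forall e, 0 < e -> exists x, T x /\ R0 - e < x <= R0).
  { intros e He. apply NNPP; intros Hn. assert (R0 <= R0 - e); [|lra].
    apply Lub. intros z Tz. apply Rnot_lt_le; intros Hz. apply Hn. exists z. split; [auto|split; [lra|apply Ub; auto]]. }
  assert (AR : A R0).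
  { apply Acl. intros e He. destruct (Approx e He) as [x [[Ax _] Hx']]. exists x. split; auto.
    unfold Rabs; destruct Rcase_abs; lra. }
  assert (NBR : ~ Bset R0) by (apply NB; lra).
  assert (Loc : 0 < R0 < 1 /\ exists ep, 0 < ep /\ forall e f, A e -> A f -> R0 - ep < e -> e <= f -> f < R0 + ep -> hom a b e f).
  { apply NNPP; intros Hn; apply NBR; split; auto. }
  destruct Loc as [HR01 [ep [Hep W]]].
  destruct (Approx ep Hep) as [x [[Ax [Hx1 Hpx]] Hx2]].
  assert (HpR : hom a b p R0) by (apply hom_glue with x; [lra|lra|auto|apply W; auto; lra]).
  destruct (Req_dec R0 q) as [E|Ne]; [subst; auto|].
  exfalso.
  destruct (classic (exists f, A f /\ R0 < f < R0 + ep /\ f <= q)) as [[f [Af [Hf1 Hf2]]]|Nf].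
  - assert (T f) by (split; [auto|split; [lra|apply hom_glue with R0; [lra|lra|auto|apply W; auto; lra]]]).
    specialize (Ub f H). lra.
  - destruct (next_point A R0 q Acl Aq ltac:(lra)) as [g [Ag [Hg1 Gg]]].
    { exists (Rmin ep (q - R0)). split; [apply Rmin_glb_lt; lra|]. intros y Ay Hy.
      assert (Rmin ep (q - R0) <= ep) by apply Rmin_l. assert (Rmin ep (q - R0) <= q - R0) by apply Rmin_r.
      apply Rnot_lt_le; intros Hlt. apply Nf. exists y. split; [auto|split; lra]. }
    assert (T g) by (split; [auto|split; [lra|apply hom_glue with R0; [lra|lra|auto|apply gapA; auto; lra]]]).
    specialize (Ub g H). lra.
Qed.

Lemma comp_hom c d : c < d -> is_component (fun x => 0 <= x <= 1 /\ ~ Bset x) (fun x => c < x < d) -> hom a b c d.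
Proof. intros Hcd Comp.
  destruct (comp_endpoints Bset c d B_closed Bzero Bone Hcd Comp) as [Hc [Hd [[Ac _] [Ad _]]]].
  destruct Comp as [_ [Sub _]].
  assert (NB : forall y, c < y < d -> ~ Bset y) by (intros y Hy; apply Sub; auto).
  assert (K := Klem c d Hcd NB).
  destruct (classic (exists p, A p /\ c < p < d)) as [[p [Ap Hp]]|Np].
  - apply hom_glue with p; [lra|lra| |].
    + apply hom_neg_inv; [|lra].
      apply (RL Hx (fun x => A (- x))); try rewrite !Ropp_involutive; auto; try lra.
      * apply closed_neg, Acl.
      * apply (cont_on_comp a (fun x => - x) (interval 0 1)); [apply Ca|rc2_t|unfold interval; intros; lra].
      * apply (cont_on_comp b (fun x => - x) (interval 0 1)); [apply Cb|rc2_t|unfold interval; intros; lra].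
      * apply Aeq; auto.
      * intros x y Ax Ay Hxy Hyd. assert (Hh := K (- y) (- x) Ay Ax ltac:(lra) ltac:(lra) ltac:(lra)).
        apply hom_neg in Hh. rewrite !Ropp_involutive in Hh. exact Hh.
      * intros l r Al Ar Hl Hlr Hr G. assert (Hh : hom a b (- r) (- l)).
        { apply gapA; auto; try lra. intros y Hy Ay. apply (G (- y)); [lra|]. rewrite Ropp_involutive; auto. }
        apply hom_neg in Hh. rewrite !Ropp_involutive in Hh. exact Hh.
    + apply (RL Hx A); auto; try lra.
      * apply Acl.
      * apply Ca_sub; lra.
      * apply Cb_sub; lra.
      * apply Aeq; auto.
      * intros x y Ax Ay Hxy Hyd. apply K; auto; lra.
      * intros l r Al Ar Hl Hlr Hr G. apply gapA; auto.
  - apply gapA; auto. intros y Hy Ay. apply Np. exists y; auto.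
Qed.


Lemma aw_part t : Bset t -> 0 < t < 1 -> aw X (a t).
Proof. intros [At NB] Ht. apply NNPP; intros Naw.
  assert (Eat := Aeq t At).
  assert (Nu0 : forall U, is_open X U -> U (a t) -> exists dl, 0 < dl /\ forall y, 0 <= y <= 1 -> Rabs (y - t) < dl -> U (a y) /\ U (b y)).
  { intros U HU Ux. destruct (Ca U HU t ltac:(unfold interval; lra) Ux) as [da [Hda Ka]].
    rewrite Eat in Ux. destruct (Cb U HU t ltac:(unfold interval; lra) Ux) as [db [Hdb Kb]].
    exists (Rmin da db). split; [apply Rmin_glb_lt; lra|]. intros y Hy Hyt.
    assert (Rmin da db <= da) by apply Rmin_l. assert (Rmin da db <= db) by apply Rmin_r.
    split; [apply Ka|apply Kb]; auto; lra. }
  assert (L : exists eL, 0 < eL /\ forall e, A e -> t - eL < e <= t -> hom a b e t).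
  { apply NNPP; intros HnL. apply Naw.
    assert (Hs : forall n, exists e, A e /\ t - / INR (S n) < e <= t /\ ~ hom a b e t).
    { intros n. apply NNPP; intros Hn. apply HnL. exists (/ INR (S n)). split; [apply Rinv_0_lt_compat, lt_0_INR; lia|].
      intros e Ae He. apply NNPP; intros Nh. apply Hn. exists e; auto. }
    destruct (seq_choice _ Hs) as [g Hg].
    assert (glt : forall n, g n < t).
    { intros n; destruct (Hg n) as [_ [[_ [H2|E]] H3]]; auto. exfalso; apply H3; rewrite E; apply hom_point; auto. }
    apply (null_from (a t) (fun _ => a) (fun _ => b) g (fun _ => t)); auto.
    - intros n. apply Ca_sub; [apply (A01 _ (proj1 (Hg n)))|lra].
    - intros n. apply Cb_sub; [apply (A01 _ (proj1 (Hg n)))|lra].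
    - intros n. apply Aeq, Hg.
    - intros n. apply Hg.
    - intros U HU Ux. destruct (Nu0 U HU Ux) as [dl [Hdl K]]. destruct (inv_small dl Hdl) as [N HN].
      exists N. intros n Hn y Hy. destruct (Hg n) as [Ag [Hg1 _]]. specialize (HN n Hn). pose proof (A01 _ Ag).
      apply K; [lra|]. unfold Rabs; destruct Rcase_abs; lra. }
  assert (Rt : exists eR, 0 < eR /\ forall f, A f -> t <= f < t + eR -> hom a b t f).
  { apply NNPP; intros HnR. apply Naw.
    assert (Hs : forall n, exists f, A f /\ t <= f < t + / INR (S n) /\ ~ hom a b t f).
    { intros n. apply NNPP; intros Hn. apply HnR. exists (/ INR (S n)). split; [apply Rinv_0_lt_compat, lt_0_INR; lia|].
      intros f Af Hf. apply NNPP; intros Nh. apply Hn. exists f; auto. }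
    destruct (seq_choice _ Hs) as [g Hg].
    assert (glt : forall n, t < g n).
    { intros n; destruct (Hg n) as [_ [[[H2|E] _] H3]]; auto. exfalso; apply H3; rewrite <- E; apply hom_point; auto. }
    apply (null_from (a t) (fun _ x => a (- x)) (fun _ x => b (- x)) (fun n => - g n) (fun _ => - t)).
    - intros n; specialize (glt n); lra.
    - intros n. apply (cont_on_comp a (fun x => - x) (interval 0 1)); [apply Ca|rc2_t|].
      destruct (Hg n) as [Ag _]. pose proof (A01 _ Ag). unfold interval; intros; lra.
    - intros n. apply (cont_on_comp b (fun x => - x) (interval 0 1)); [apply Cb|rc2_t|].
      destruct (Hg n) as [Ag _]. pose proof (A01 _ Ag). unfold interval; intros; lra.
    - intros n. rewrite Ropp_involutive. apply Aeq, Hg.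
    - intros n. rewrite Ropp_involutive. auto.
    - intros n Hh. apply hom_neg_inv in Hh; [|left; auto]. apply (Hg n); auto.
    - intros U HU Ux. destruct (Nu0 U HU Ux) as [dl [Hdl K]]. destruct (inv_small dl Hdl) as [N HN].
      exists N. intros n Hn y Hy. destruct (Hg n) as [Ag [Hg1 _]]. specialize (HN n Hn). pose proof (A01 _ Ag).
      apply K; [lra|]. unfold Rabs; destruct Rcase_abs; lra. }
  destruct L as [eL [HeL KL]]. destruct Rt as [eR [HeR KR]].
  apply NB. split; auto. exists (Rmin eL eR). split; [apply Rmin_glb_lt; lra|].
  assert (Rmin eL eR <= eL) by apply Rmin_l. assert (Rmin eL eR <= eR) by apply Rmin_r.
  intros e f Ae Af He Hef Hf.
  destruct (Rle_or_lt f t) as [Hft|Hft].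
  - apply (hom_SC a b e f t); auto; apply KL; auto; lra.
  - destruct (Rle_or_lt t e) as [Hte|Hte].
    + apply (hom_PC a b t e f); auto; try lra; apply KR; auto; lra.
    + apply hom_glue with t; [lra|lra| |]; [apply KL|apply KR]; auto; lra.
Qed.

End Main.


Theorem mainTheorem14 (X : TopSpace) (Hx : well_defined_scattered_products X)
  (a b : R -> X) (A : R -> Prop) :
  is_path a 0 1 -> is_path b 0 1 -> htpy_cut_set a b 0 1 A ->
  exists B : R -> Prop,
    (forall x, B x -> A x) /\ htpy_cut_set a b 0 1 B /\
    (forall y, image a (fun x => B x /\ 0 < x < 1) y <->
               image b (fun x => B x /\ 0 < x < 1) y) /\
    (forall y, image a (fun x => B x /\ 0 < x < 1) y -> aw X y).
Proof.
  intros Pa Pb HA. exists (Bset a b A).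
  assert (Eq : forall x, Bset a b A x -> a x = b x) by (intros x [Ax _]; apply (Aeq a b A HA); auto).
  split; [intros x [Ax _]; auto|]. split; [|split].
  - split; [intros x [Ax _]; apply (A01 a b A HA); auto|].
    split; [apply (B_closed a b A HA)|].
    split; [|split; [apply (Bzero a b A HA)|split; [apply (Bone a b A HA)|split; [exact Eq|]]]].
    + intros [x [e [He All]]]. destruct HA as [_ [_ [ND _]]]. apply ND. exists x, e. split; auto.
      intros y Hy ep Hep. destruct (All y Hy ep Hep) as [z [[Az _] Hz]]. exists z; auto.
    + intros c d Hcd Comp. apply (comp_hom Hx a b A Pa Pb HA); auto.
  - intros y; split; intros [x [[Bx Hx01] E]]; exists x; split; auto; rewrite <- E; [symmetry|]; apply Eq; auto.
  - intros y [x [[Bx Hx01] E]]. subst y. apply (aw_part a b A Pa Pb HA); auto.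
Qed.
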